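(* Let $(\mathcal{G},S)$ be an instance of \textsc{Temporally Disjoint Walks} where $\mathcal{G}$ is a temporal line, and let $\mathcal{S}$ be a solution that minimizes the sum of the lengths of its walks among all solutions. Let $W\in\mathcal{S}$ be a temporal $(s,z)$-walk. Then at most $2|S|$ pairs of transitions of the form $(a,b,t),(b,a,t')$ with $t<t'$ are consecutive in $W$.
   Context: A temporal graph $\mathcal{G}=(V,E_1,\ldots,E_T)$ has vertex set $V$ and edge sets $E_1,\ldots,E_T\subseteq\binom{V}{2}$; it is a temporal line if its underlying graph $(V,\bigcup_i E_i)$ is a path. A temporal $(s,z)$-walk of length $k$ from $s=v_0$ to $z=v_k$ is a sequence of transitions $((v_{i-1},v_i,t_i))_{i=1}^k$ with $\{v_{i-1},v_i\}\in E_{t_i}$ and $t_1<\cdots<t_k$. It occupies $v_i$ during $[t_i,t_{i+1}]$ for $i\in[k-1]$, $v_0$ during $[t_1,t_1]$ and $v_k$ during $[t_k,t_k]$. Two temporal walks are temporally disjoint unless some vertex is occupied by both during intersecting time intervals. \textsc{Temporally Disjoint Walks} asks, given $\mathcal{G}$ and a multiset $S\subseteq V\times V$ of source-sink pairs, for pairwise temporally disjoint temporal $(s_i,z_i)$-walks, one for each $(s_i,z_i)\in S$; a solution $\mathcal{S}$ is such a family, and $|S|$ is the number of source-sink pairs. *)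

(* Defs.v *)
From mathcomp Require Import all_boot.
Set Implicit Arguments. Unset Strict Implicit. Unset Printing Implicit Defensive.

(* A temporal graph over a finite vertex type V: a lifetime T and edge sets
   E t : {set {set V}} for t = 1..T (values of E outside [1,T] are ignored). *)

Section TG.
Variable V : finType.

Definition edge_at (T : nat) (E : nat -> {set {set V}}) (u v : V) (t : nat) : Prop :=
  1 <= t <= T /\ [set u; v] \in E t.

Definition is_temporal_graph (T : nat) (E : nat -> {set {set V}}) : Prop :=
  forall t e, 1 <= t <= T -> e \in E t -> #|e| = 2.

(* the underlying graph (V, \bigcup_t E_t) is a path: there is an ordering p
   of all vertices (each exactly once) such that {u,v} is an edge of the
   underlying graph iff u,v are consecutive in p *)
Definition temporal_line (T : nat) (E : nat -> {set {set V}}) : Prop :=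
  exists p : seq V,
    [/\ p <> [::], uniq p, (forall v, v \in p) &
     forall u v : V, (exists t, edge_at T E u v t) <->
       (exists2 i, i.+1 < size p &
          [set u; v] = [set nth u p i; nth u p i.+1])].

Definition transition := (V * V * nat)%type.
Definition tsrc (x : transition) : V := x.1.1.
Definition ttgt (x : transition) : V := x.1.2.
Definition ttime (x : transition) : nat := x.2.

(* W is a temporal (s,z)-walk; a walk of length 0 is the empty sequence
   and is an (s,z)-walk iff s = z *)
Fixpoint chain (W : seq transition) : Prop :=
  match W with
  | x :: ((y :: _) as W') => ttgt x = tsrc y /\ ttime x < ttime y /\ chain W'
  | _ => True
  end.

Definition is_walk (T : nat) (E : nat -> {set {set V}}) (s z : V)
  (W : seq transition) : Prop :=
  match W with
  | [::] => s = z
  | x :: _ =>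
      [/\ tsrc x = s, ttgt (last x W) = z, chain W &
       forall y, y \in W -> edge_at T E (tsrc y) (ttgt y) (ttime y)]
  end.

(* occupation intervals (v, l, r): W occupies v during [l, r] *)
Fixpoint mid_intervals (W : seq transition) : seq (V * nat * nat) :=
  match W with
  | x :: ((y :: _) as W') => (ttgt x, ttime x, ttime y) :: mid_intervals W'
  | _ => [::]
  end.

Definition occ_intervals (W : seq transition) : seq (V * nat * nat) :=
  match W with
  | [::] => [::]
  | x :: _ => (tsrc x, ttime x, ttime x) :: mid_intervals W
              ++ [:: (ttgt (last x W), ttime (last x W), ttime (last x W))]
  end.

Definition temp_disjoint (W1 W2 : seq transition) : Prop :=
  forall v a b c d,
    (v, a, b) \in occ_intervals W1 -> (v, c, d) \in occ_intervals W2 ->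
    ~ (maxn a c <= minn b d).

(* a solution for the multiset S (a list of source-sink pairs): one walk per
   pair (by position), pairwise temporally disjoint *)
Definition is_solution (T : nat) (E : nat -> {set {set V}})
  (S : seq (V * V)) (Ws : seq (seq transition)) : Prop :=
  [/\ size Ws = size S,
      (forall i (d : V * V), i < size S ->
         is_walk T E (nth d S i).1 (nth d S i).2 (nth [::] Ws i)) &
      forall i j, i < size S -> j < size S -> i <> j ->
         temp_disjoint (nth [::] Ws i) (nth [::] Ws j)].

Definition total_length (Ws : seq (seq transition)) : nat := sumn (map size Ws).

Definition n_backforth (W : seq transition) : nat :=
  match W with
  | [::] => 0
  | x :: _ =>
    count (fun j => [&& tsrc (nth x W j) == ttgt (nth x W j.+1),
                        ttgt (nth x W j) == tsrc (nth x W j.+1) &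
                        ttime (nth x W j) < ttime (nth x W j.+1)])
          (iota 0 (size W).-1)
  end.

End TG.

(* Main.v *)
Require Import Defs.
From mathcomp Require Import all_boot zify.
From Stdlib Require Import Classical.
Set Implicit Arguments. Unset Strict Implicit. Unset Printing Implicit Defensive.

Lemma chainP (V : finType) (x0 : transition V) (W : seq (transition V)) :
  chain W <-> forall i, i.+1 < size W ->
     ttgt (nth x0 W i) = tsrc (nth x0 W i.+1) /\ ttime (nth x0 W i) < ttime (nth x0 W i.+1).
Proof.
elim: W => [|x W IH] /=; first by split.
case: W IH => [|y W] IH /=; first by split => // _ i.
split.
- move=> [h1 [h2 h3]] [|i] /= hi; first by [].
  exact: (proj1 IH h3 i hi).
- move=> h; split; first exact: (proj1 (h 0 erefl)).
  split; first exact: (proj2 (h 0 erefl)).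
  apply: (proj2 IH) => i hi; exact: (h i.+1 hi).
Qed.

Lemma midP (V : finType) (x0 : transition V) W v l r :
  (v, l, r) \in mid_intervals W <->
  exists i, i.+1 < size W /\ v = ttgt (nth x0 W i) /\ l = ttime (nth x0 W i)
            /\ r = ttime (nth x0 W i.+1).
Proof.
elim: W => [|x W IH] /=; first by split => // -[i []].
case: W IH => [|y W] IH /=; first by split => // -[i []].
rewrite in_cons; split.
- case/orP => [/eqP [-> -> ->]|h]; first by exists 0.
  have [i [hi [h1 [h2 h3]]]] := proj1 IH h.
  by exists i.+1.
- move=> [[|i] [hi [h1 [h2 h3]]]]; first by rewrite h1 h2 h3 /= eqxx.
  apply/orP; right; apply: (proj2 IH); by exists i.
Qed.

Lemma occP (V : finType) (x0 : transition V) W v l r :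
  (v,l,r) \in occ_intervals W <->
  0 < size W /\
  ((v = tsrc (nth x0 W 0) /\ l = ttime (nth x0 W 0) /\ r = l) \/
   (exists i, i.+1 < size W /\ v = ttgt (nth x0 W i) /\ l = ttime (nth x0 W i)
              /\ r = ttime (nth x0 W i.+1)) \/
   (v = ttgt (nth x0 W (size W).-1) /\ l = ttime (nth x0 W (size W).-1) /\ r = l)).
Proof.
case: W => [|x W]; first by split => // -[].
have hl : nth x0 (x :: W) (size (x :: W)).-1 = last x W by rewrite nth_last.
rewrite hl.
have -> : occ_intervals (x::W) = (tsrc x, ttime x, ttime x) :: mid_intervals (x::W) ++
  [:: (ttgt (last x W), ttime (last x W), ttime (last x W))] by [].
rewrite in_cons mem_cat mem_seq1; split.
- move=> h; split => //.
  case/orP: h => [/eqP [-> -> ->]|]; first by left.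
  case/orP => [h|/eqP [-> -> ->]]; last by right; right.
  by right; left; apply: (proj1 (midP x0 _ _ _ _)).
- move=> [_ [[-> [-> ->]]|[h|[-> [-> ->]]]]].
  + by rewrite eqxx.
  + by apply/orP; right; apply/orP; left; apply: (proj2 (midP x0 _ _ _ _)).
  + by rewrite eqxx !orbT.
Qed.
Lemma walkP (V : finType) T E s z (W : seq (transition V)) x0 : 0 < size W ->
  is_walk T E s z W <->
  [/\ tsrc (nth x0 W 0) = s, ttgt (nth x0 W (size W).-1) = z,
      (forall i, i.+1 < size W -> ttgt (nth x0 W i) = tsrc (nth x0 W i.+1)
                                  /\ ttime (nth x0 W i) < ttime (nth x0 W i.+1)) &
      (forall y, y \in W -> edge_at T E (tsrc y) (ttgt y) (ttime y))].
Proof.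
case: W => [|x W] // _.
have hl : nth x0 (x :: W) (size (x :: W)).-1 = last x W by rewrite nth_last.
rewrite hl; split.
- move=> [h1 h2 h3 h4]; split => //. exact: (proj1 (chainP x0 _) h3).
- move=> [h1 h2 h3 h4]; split => //. exact: (proj2 (chainP x0 _) h3).
Qed.

Definition remj (V : finType) (W : seq (transition V)) j := take j W ++ drop j.+2 W.

Lemma size_remj (V : finType) (W : seq (transition V)) j :
  j.+1 < size W -> size (remj W j) = size W - 2.
Proof. move=> h; rewrite /remj size_cat size_takel ?size_drop; lia. Qed.

Lemma nth_remj_lt (V : finType) (W : seq (transition V)) j x0 i :
  j.+1 < size W -> i < j -> nth x0 (remj W j) i = nth x0 W i.
Proof.
move=> h hi; rewrite /remj nth_cat size_takel; last lia.
by rewrite hi nth_take.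
Qed.

Lemma nth_remj_ge (V : finType) (W : seq (transition V)) j x0 i :
  j.+1 < size W -> j <= i -> nth x0 (remj W j) i = nth x0 W i.+2.
Proof.
move=> h hi; rewrite /remj nth_cat size_takel; last lia.
have -> : (i < j) = false by lia.
rewrite nth_drop; congr nth; lia.
Qed.

Definition chidx (V : finType) x0 (W : seq (transition V)) :=
  forall i, i.+1 < size W -> ttgt (nth x0 W i) = tsrc (nth x0 W i.+1)
                             /\ ttime (nth x0 W i) < ttime (nth x0 W i.+1).

Lemma occ_first (V : finType) x0 (W : seq (transition V)) :
  0 < size W -> (tsrc (nth x0 W 0), ttime (nth x0 W 0), ttime (nth x0 W 0)) \in occ_intervals W.
Proof. move=> h; apply/(occP x0); split => //; left; done. Qed.

Lemma occ_mid (V : finType) x0 (W : seq (transition V)) i :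
  i.+1 < size W -> (ttgt (nth x0 W i), ttime (nth x0 W i), ttime (nth x0 W i.+1)) \in occ_intervals W.
Proof. move=> h; apply/(occP x0); split; first lia. right; left; by exists i. Qed.

Lemma occ_last (V : finType) x0 (W : seq (transition V)) :
  0 < size W -> (ttgt (nth x0 W (size W).-1), ttime (nth x0 W (size W).-1), ttime (nth x0 W (size W).-1)) \in occ_intervals W.
Proof. move=> h; apply/(occP x0); split => //; right; right; done. Qed.

Lemma cov (V : finType) (W : seq (transition V)) v l r :
  (v,l,r) \in occ_intervals W -> exists l' r', (v,l',r') \in occ_intervals W /\ l' <= l /\ r <= r'.
Proof. by move=> h; exists l, r. Qed.

Lemma rem_occ (V : finType) (W : seq (transition V)) j x0 v l r :
  chidx x0 W -> j.+1 < size W -> tsrc (nth x0 W j) = ttgt (nth x0 W j.+1) ->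
  (v,l,r) \in occ_intervals (remj W j) ->
  (exists l' r', (v,l',r') \in occ_intervals W /\ l' <= l /\ r <= r') \/
  (v = tsrc (nth x0 W j) /\ (v, l, ttime (nth x0 W j)) \in occ_intervals W
   /\ (v, ttime (nth x0 W j.+1), r) \in occ_intervals W
   /\ l <= ttime (nth x0 W j) /\ ttime (nth x0 W j.+1) <= r).
Proof.
move=> hc hj heq /(occP x0); rewrite size_remj //.
move=> [hs [[-> [-> ->]]|[[i [hi [-> [-> ->]]]]|[-> [-> ->]]]]].
- case: j hj heq => [|j] hj heq.
  + rewrite nth_remj_ge //; left.
    exists (ttime (nth x0 W 1)), (ttime (nth x0 W 2)); split; last first.
      have := hc 1; lia.
    have [<- _] := hc 1 ltac:(lia).
    apply: occ_mid; lia.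
  + rewrite nth_remj_lt //; left; apply: cov.
    apply: occ_first; lia.
- case: (ltngtP i.+1 j) => hij.
  + rewrite !nth_remj_lt //; try lia. left; apply: cov.
    apply: occ_mid; lia.
  + rewrite !nth_remj_ge //; try lia. left; apply: cov.
    apply: occ_mid; lia.
  + subst j. rewrite nth_remj_lt // nth_remj_ge //.
    have [e1 _] := hc i ltac:(lia).
    have [e2 _] := hc i.+1 ltac:(lia).
    have [e3 _] := hc i.+2 ltac:(lia).
    right; split; first by rewrite e1.
    split; first by apply: occ_mid; lia.
    split; first by rewrite e1 heq; apply: occ_mid; lia.
    have := hc i; have := hc i.+2; lia.
- case: (ltnP j.+2 (size W)) => hjs.
  + rewrite nth_remj_ge; try lia.
    have -> : (size W - 2).-1.+2 = (size W).-1 by lia.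
    left; apply: cov.
    apply: occ_last; lia.
  + have ej : (size W - 2).-1 = j.-1 by lia.
    rewrite ej nth_remj_lt; try lia.
    left; exists (ttime (nth x0 W j.-1)), (ttime (nth x0 W j.-1.+1)); split.
      apply: occ_mid; lia.
    have := hc j.-1; lia.
Qed.
Lemma chidx_walk (V : finType) T E s z (W : seq (transition V)) x0 :
  is_walk T E s z W -> chidx x0 W.
Proof.
case: W => [|x W]; first by move=> _ i.
move=> h; have [_ _ h3 _] := proj1 (walkP T E s z (W:=x::W) x0 erefl) h; exact: h3.
Qed.

Lemma rem_walk (V : finType) T E s z (W : seq (transition V)) j x0 :
  is_walk T E s z W -> j.+1 < size W -> tsrc (nth x0 W j) = ttgt (nth x0 W j.+1) ->
  is_walk T E s z (remj W j).
Proof.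
move=> hw hj heq.
have [h1 h2 h3 h4] := proj1 (walkP T E s z (W:=W) x0 ltac:(lia)) hw.
have hs := size_remj hj.
case: (posnP (size W - 2)) => hs0.
  have -> : remj W j = [::] by apply: size0nil; lia.
  have ej : j = 0 by lia.
  clear hs; subst j; rewrite /= -h1 -h2 heq; congr (ttgt (nth _ _ _)); lia.
apply: (proj2 (walkP T E s z (W:=remj W j) x0 ltac:(lia))).
split.
- case: j hj heq hs => [|j] hj heq hs.
    rewrite nth_remj_ge //. have [<- _] := h3 1 ltac:(lia). by rewrite -heq.
  by rewrite nth_remj_lt.
- rewrite hs.
  case: (ltnP j.+2 (size W)) => hjs.
  + rewrite nth_remj_ge; try lia.
    have -> : (size W - 2).-1.+2 = (size W).-1 by lia.
    done.
  + have ej : (size W - 2).-1 = j.-1 by lia.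
    rewrite ej nth_remj_lt; try lia.
    have [-> _] := h3 j.-1 ltac:(lia).
    have -> : j.-1.+1 = j by lia.
    rewrite heq -h2; congr (ttgt (nth _ _ _)); lia.
- move=> i; rewrite hs => hi.
  case: (ltngtP i.+1 j) => hij.
  + rewrite !nth_remj_lt //; try lia. apply: h3; lia.
  + rewrite !nth_remj_ge //; try lia. apply: h3; lia.
  + subst j. rewrite nth_remj_lt // nth_remj_ge //.
    have [e1 t1] := h3 i ltac:(lia).
    have [e2 t2] := h3 i.+1 ltac:(lia).
    have [e3 t3] := h3 i.+2 ltac:(lia).
    split; last lia.
    by rewrite e1 heq e3.
- move=> y; rewrite mem_cat => /orP [/mem_take|/mem_drop]; exact: h4.
Qed.

Lemma td_sym (V : finType) (W1 W2 : seq (transition V)) :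
  temp_disjoint W1 W2 -> temp_disjoint W2 W1.
Proof.
move=> h v a b c d h1 h2 hov; apply: (h v c d a b h2 h1); lia.
Qed.

Lemma rem_td (V : finType) (W W2 : seq (transition V)) j x0 :
  chidx x0 W -> j.+1 < size W -> tsrc (nth x0 W j) = ttgt (nth x0 W j.+1) ->
  temp_disjoint W W2 ->
  (forall c d, (tsrc (nth x0 W j), c, d) \in occ_intervals W2 ->
     ~ (ttime (nth x0 W j) < c /\ d < ttime (nth x0 W j.+1))) ->
  temp_disjoint (remj W j) W2.
Proof.
move=> hc hj heq hd hno v a b c d h1 h2 hov.
case: (rem_occ hc hj heq h1) => [[l' [r' [h [hl hr]]]]|[ev [h3 [h4 [hl hr]]]]].
  apply: (hd v l' r' c d h h2); lia.
subst v.
have := hd _ _ _ _ _ h3 h2; have := hd _ _ _ _ _ h4 h2; have := hno c d h2.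
have := hc j hj; lia.
Qed.

Definition total_set (V : finType) (Ws : seq (seq (transition V))) k W' :
  k < size Ws ->
  total_length (set_nth [::] Ws k W') + size (nth [::] Ws k) = total_length Ws + size W'.
Proof.
elim: Ws k => [|W Ws IH] [|k] //= hk; rewrite /total_length /=; first lia.
have := IH k hk; rewrite /total_length; lia.
Qed.

Lemma line_nb (V : finType) T E (a w : V) t :
  temporal_line T E -> edge_at T E a w t ->
  forall p : seq V, p <> [::] -> uniq p ->
  (forall u v : V, (exists t, edge_at T E u v t) <->
       (exists2 i, i.+1 < size p & [set u; v] = [set nth u p i; nth u p i.+1])) ->
  w = nth a p (index a p).+1 \/ w = nth a p (index a p).-1.
Proof.
move=> _ he p _ hu hp.
have [i hi hset] := proj1 (hp a w) (ex_intro _ t he).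
have ha : a \in [set nth a p i; nth a p i.+1] by rewrite -hset !inE eqxx.
have hneq : nth a p i != nth a p i.+1.
  by rewrite (nth_uniq a (ltnW hi) hi hu); lia.
rewrite !inE in ha.
case/orP: ha => /eqP ha.
- have ki : index a p = i by rewrite {1}ha (index_uniq a (ltnW hi) hu).
  left; rewrite ki.
  have : nth a p i.+1 \in [set a; w] by rewrite hset !inE eqxx orbT.
  rewrite !inE => /orP [/eqP e|/eqP e]; last by [].
  by rewrite -ha e eqxx in hneq.
- have ki : index a p = i.+1 by rewrite {1}ha (index_uniq a hi hu).
  right; rewrite ki /=.
  have : nth a p i \in [set a; w] by rewrite hset !inE eqxx.
  rewrite !inE => /orP [/eqP e|/eqP e]; last by [].
  by rewrite -ha e eqxx in hneq.
Qed.

Lemma line3 (V : finType) T E (a b x y : V) t1 t2 t3 :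
  temporal_line T E -> edge_at T E a b t1 -> edge_at T E a x t2 -> edge_at T E a y t3 ->
  x <> b -> y <> b -> x = y.
Proof.
move=> hl h1 h2 h3 hx hy.
have [p [pn hu hall hp]] := hl.
have := line_nb hl h1 pn hu hp; have := line_nb hl h2 pn hu hp; have := line_nb hl h3 pn hu hp.
move=> [ey|ey] [ex|ex] [eb|eb]; congruence.
Qed.
Definition evW (V : finType) (W : seq (transition V)) : seq nat :=
  if W is x :: W' then [:: ttime x; ttime (last x W')] else [::].
Definition evs (V : finType) (Ws : seq (seq (transition V))) := flatten (map (@evW V) Ws).

Lemma evs_size (V : finType) (Ws : seq (seq (transition V))) : size (evs Ws) <= 2 * size Ws.
Proof.
elim: Ws => [|W Ws IH] //=; rewrite /evs /= size_cat -/(evs Ws).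
case: W => [|x W] /=; lia.
Qed.

Lemma evs_first (V : finType) (Ws : seq (seq (transition V))) k x0 :
  k < size Ws -> 0 < size (nth [::] Ws k) -> ttime (nth x0 (nth [::] Ws k) 0) \in evs Ws.
Proof.
move=> hk hs; apply/flatten_mapP; exists (nth [::] Ws k); first exact: mem_nth.
case: (nth [::] Ws k) hs => [|x W] //= _; by rewrite inE eqxx.
Qed.

Lemma evs_last (V : finType) (Ws : seq (seq (transition V))) k x0 :
  k < size Ws -> 0 < size (nth [::] Ws k) ->
  ttime (nth x0 (nth [::] Ws k) (size (nth [::] Ws k)).-1) \in evs Ws.
Proof.
move=> hk hs; apply/flatten_mapP; exists (nth [::] Ws k); first exact: mem_nth.
case: (nth [::] Ws k) hs => [|x W] // _.
have -> : nth x0 (x :: W) (size (x :: W)).-1 = last x W by rewrite nth_last.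
by rewrite /= !inE eqxx orbT.
Qed.

Lemma edge_sym (V : finType) T E (u v : V) t : edge_at T E u v t -> edge_at T E v u t.
Proof. by move=> [h1 h2]; split => //; rewrite setUC. Qed.

Lemma walk_edge (V : finType) T E s z (W : seq (transition V)) x0 i :
  is_walk T E s z W -> i < size W ->
  edge_at T E (tsrc (nth x0 W i)) (ttgt (nth x0 W i)) (ttime (nth x0 W i)).
Proof.
move=> hw hi.
have [_ _ _ h4] := proj1 (walkP T E s z (W:=W) x0 ltac:(lia)) hw.
apply: h4; exact: mem_nth.
Qed.

Lemma block (V : finType) T E S (Ws : seq (seq (transition V))) :
  temporal_line T E -> is_solution T E S Ws ->
  (forall Ws', is_solution T E S Ws' -> total_length Ws <= total_length Ws') ->
  forall n k j x0, k < size S -> j.+1 < size (nth [::] Ws k) ->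
  tsrc (nth x0 (nth [::] Ws k) j) = ttgt (nth x0 (nth [::] Ws k) j.+1) ->
  ttime (nth x0 (nth [::] Ws k) j.+1) - ttime (nth x0 (nth [::] Ws k) j) <= n ->
  has (fun tau => ttime (nth x0 (nth [::] Ws k) j) < tau < ttime (nth x0 (nth [::] Ws k) j.+1))
      (evs Ws).
Proof.
move=> hl [hsz hw hd] hmin n; elim: n => [|n IH] k j x0 hk hj heq hn.
  have hwk := hw k (tsrc x0, tsrc x0) hk.
  have [_ lt0] := chidx_walk x0 hwk hj; lia.
have hwk : is_walk T E (nth (tsrc x0, tsrc x0) S k).1 (nth (tsrc x0, tsrc x0) S k).2 (nth [::] Ws k)
  := hw k (tsrc x0, tsrc x0) hk.
have hc := chidx_walk x0 hwk.
have [e0 lt0] := hc j hj.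
case: (classic (exists m c d, m < size S /\ m <> k /\
          (tsrc (nth x0 (nth [::] Ws k) j), c, d) \in occ_intervals (nth [::] Ws m) /\
          ttime (nth x0 (nth [::] Ws k) j) < c /\ d < ttime (nth x0 (nth [::] Ws k) j.+1)))
  => [[m [c [d [hm [hmk [hocc [htc hdt]]]]]]] | hno].
  have hwm : is_walk T E (nth (tsrc x0, tsrc x0) S m).1 (nth (tsrc x0, tsrc x0) S m).2 (nth [::] Ws m)
    := hw m (tsrc x0, tsrc x0) hm.
  have hcm := chidx_walk x0 hwm.
  have hdkm : temp_disjoint (nth [::] Ws k) (nth [::] Ws m) by apply: hd => //; lia.
  have hsm : 0 < size (nth [::] Ws m) by case: (proj1 (occP x0 _ _ _ _) hocc).
  case: (proj1 (occP x0 _ _ _ _) hocc) => _ [[ev [ec ed]]|[[i [hi [ev [ec ed]]]]|[ev [ec ed]]]].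
  + apply/hasP; exists c; first by rewrite ec; apply: evs_first; [lia | exact: hsm].
    apply/andP; split; lia.
  + have [em ltm] := hcm i hi.
    have hbx : tsrc (nth x0 (nth [::] Ws m) i) <> ttgt (nth x0 (nth [::] Ws k) j).
      move=> ex.
      have [l [hli hlc]] : exists l, (ttgt (nth x0 (nth [::] Ws k) j), l, c) \in occ_intervals (nth [::] Ws m) /\ l <= c.
        case: i hi em ltm ec ed ev ex => [|i] hi em ltm ec ed ev ex.
          exists c; split => //; rewrite -ex ec; exact: occ_first.
        have [em' ltm'] := hcm i ltac:(lia).
        exists (ttime (nth x0 (nth [::] Ws m) i)); split; last lia.
        rewrite -ex -em' ec; apply: occ_mid; lia.
      apply: (hdkm _ _ _ _ _ (occ_mid x0 hj) hli); lia.
    have hby : ttgt (nth x0 (nth [::] Ws m) i.+1) <> ttgt (nth x0 (nth [::] Ws k) j).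
      move=> ey.
      have [r [hri hrd]] : exists r, (ttgt (nth x0 (nth [::] Ws k) j), d, r) \in occ_intervals (nth [::] Ws m) /\ d <= r.
        case: (ltnP i.+2 (size (nth [::] Ws m))) => hi2.
          have [em' ltm'] := hcm i.+1 hi2.
          exists (ttime (nth x0 (nth [::] Ws m) i.+2)); split; last lia.
          rewrite -ey ed; apply: occ_mid; lia.
        exists d; split => //.
        have ei : (size (nth [::] Ws m)).-1 = i.+1 by lia.
        rewrite -ey ed -ei; apply: occ_last; lia.
      apply: (hdkm _ _ _ _ _ (occ_mid x0 hj) hri); lia.
    have hea := walk_edge x0 hwk (ltnW hj).
    have hex := edge_sym (walk_edge x0 hwm (ltnW hi)).
    have hey := walk_edge x0 hwm hi.
    rewrite -em -ev in hey; rewrite -ev in hex.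
    have exy := line3 hl hea hex hey hbx hby.
    have := IH m i x0 hm hi exy ltac:(lia).
    move/hasP => [tau htau /andP [h1 h2]].
    apply/hasP; exists tau => //; apply/andP; split; lia.
  + apply/hasP; exists c; first by rewrite ec; apply: evs_last; [lia | exact: hsm].
    apply/andP; split; lia.
- exfalso.
  set Ws' := set_nth [::] Ws k (remj (nth [::] Ws k) j).
  have hsol : is_solution T E S Ws'.
    split.
    + rewrite size_set_nth; lia.
    + move=> i d hi; rewrite nth_set_nth /=; case: eqP => [ei|_]; last exact: hw.
      subst i; apply: (rem_walk (x0 := x0)); [exact: hw | exact: hj | exact: heq].
    + move=> i i' hi hi' hne; rewrite !nth_set_nth /=.
      have hno' : forall i', i' < size S -> i' <> k -> forall c d,
          (tsrc (nth x0 (nth [::] Ws k) j), c, d) \in occ_intervals (nth [::] Ws i') ->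
          ~ (ttime (nth x0 (nth [::] Ws k) j) < c /\ d < ttime (nth x0 (nth [::] Ws k) j.+1)).
        move=> i'' hi'' hne'' c d hocc [h1 h2]; apply: hno; by exists i'', c, d.
      case: eqP => [ei|ni]; case: eqP => [ei'|ni'].
      * by subst; case: hne.
      * subst i; exact: (rem_td hc hj heq (hd k i' hk hi' hne) (hno' i' hi' ni')).
      * subst i'; apply: td_sym.
        exact: (rem_td hc hj heq (hd k i hk hi (nesym ni)) (hno' i hi ni)).
      * exact: hd.
  have h1 := hmin Ws' hsol.
  have h2 := total_set (remj (nth [::] Ws k) j) (ltac:(lia) : k < size Ws).
  rewrite size_remj // in h2.
  rewrite -/Ws' in h2.
  lia.
Qed.
Lemma count_bound (V : finType) (W : seq (transition V)) x0 (P : pred nat) (ev : seq nat) :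
  chidx x0 W ->
  (forall j, j.+1 < size W -> P j ->
     has (fun tau => ttime (nth x0 W j) < tau < ttime (nth x0 W j.+1)) ev) ->
  count P (iota 0 (size W).-1) <= size ev.
Proof.
move=> hc hh.
rewrite -size_filter.
set L := filter P (iota 0 (size W).-1).
pose f j := nth 0 ev (find (fun tau => ttime (nth x0 W j) < tau < ttime (nth x0 W j.+1)) ev).
have hL : forall j, j \in L -> j.+1 < size W /\ P j.
  move=> j; rewrite mem_filter mem_iota => /andP [hp hj]; split => //; lia.
have hf : forall j, j \in L -> f j \in ev /\ ttime (nth x0 W j) < f j < ttime (nth x0 W j.+1).
  move=> j /hL [hj hp].
  have hh' := hh j hj hp.
  split; [apply: mem_nth; rewrite -has_find // | exact: (nth_find 0 hh')].
have hmono : forall a b, a <= b -> b < size W -> ttime (nth x0 W a) <= ttime (nth x0 W b).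
  move=> a b; elim: b => [|b IHb] hab hb.
    by have -> : a = 0 by lia.
  have [->|hab'] : a = b.+1 \/ a <= b by lia.
    done.
  have := IHb hab' (ltnW hb); have [_ h] := hc b hb; lia.
rewrite -(size_map f).
apply: uniq_leq_size.
- rewrite map_inj_in_uniq; first by rewrite filter_uniq // iota_uniq.
  move=> a b ha hb e.
  have [_ /andP [a1 a2]] := hf a ha; have [_ /andP [b1 b2]] := hf b hb.
  have [ha' _] := hL a ha; have [hb' _] := hL b hb.
  case: (ltngtP a b) => // hab.
  + have := hmono a.+1 b hab (ltnW hb'); lia.
  + have := hmono b.+1 a hab (ltnW ha'); lia.
- move=> y /mapP [j hj ->]; exact: (hf j hj).1.
Qed.

Theorem mainTheorem8 (V : finType) (T : nat) (E : nat -> {set {set V}})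
  (S : seq (V * V)) (Ws : seq (seq (transition V))) :
  is_temporal_graph T E ->
  temporal_line T E ->
  is_solution T E S Ws ->
  (forall Ws', is_solution T E S Ws' -> total_length Ws <= total_length Ws') ->
  forall i, i < size S -> n_backforth (nth [::] Ws i) <= 2 * size S.
Proof.
move=> htg hl hsol hmin i hi.
have [hsz hw hd] := hsol.
have hb := block hl hsol hmin.
rewrite /n_backforth.
case eW: (nth [::] Ws i) => [|x W'] //.
have hwi := hw i (tsrc x, tsrc x) hi; rewrite eW in hwi.
apply: leq_trans (count_bound (x0 := x) (W := x :: W') (ev := evs Ws) _ _) _.
- exact: chidx_walk hwi.
- move=> j hj /= /andP [/eqP h1 /andP [_ h3]].
  have := hb _ i j x hi; rewrite eW; apply => //.
- have := evs_size Ws; lia.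
Qed.
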